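(* Let $q$ be a prime power, and let $\chi'$ and $\chi$ be the canonical additive characters of $\mathbb{F}_{q^2}$ and $\mathbb{F}_q$, respectively. For integers $e_1,e_2$ and $a,b\in\mathbb{F}_{q^2}$, define $$S_{(e_1,e_2)}(a,b):=\sum_{x\in\mathbb{F}_{q^2}^*}\chi'\!\left(a x^{(q+1)e_1}+b x^{e_2}\right).$$ If $a^q+a\neq 0$, $b\neq 0$ and $\gcd(q+1,e_2)=1$, then $$S_{(e_1,e_2)}(a,b)=-\sum_{z\in\mathbb{F}_q^*}\sum_{x\in\mathbb{F}_q^*}\chi\!\left(z+(a^q+a)x^{e_1}+z^{-1}b^{q+1}x^{e_2}\right).$$
   Context: For a finite field $F$ of characteristic $p$, the canonical additive character is $\chi(c)=e^{2\pi i\,\mathrm{Tr}_{F/\mathbb{F}_p}(c)/p}$. *)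

(* Defs.v *)
From HB Require Import structures.
From mathcomp Require Import all_boot all_order all_algebra all_field.
From mathcomp Require Import complex.
From mathcomp Require Import reals trigo.
Set Implicit Arguments. Unset Strict Implicit. Unset Printing Implicit Defensive.
Import Order.TTheory GRing.Theory Num.Theory.
Local Open Scope ring_scope.

Definition expi (R : realType) (t : R) : R[i] := Complex (cos t) (sin t).

(* Absolute trace Tr_{F/F_p}(c) = c + c^p + ... + c^(p^(m-1)) of an element c of
   a field F with p^m elements; here F is either L itself or the subfield
   {x in L | x^q = x}, and c is viewed inside L (the value lies in the prime
   subfield of L). *)
Definition abstrace (L : finFieldType) (p m : nat) (c : L) : L :=
  \sum_(i < m) c ^+ (p ^ i).

(* canonical additive character chi(c) = exp(2 pi i Tr(c)/p), where the prime
   field element Tr(c) is identified with the unique k in {0,..,p-1} with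
   k%:R = Tr(c). *)
Definition canchar (R : realType) (L : finFieldType) (p m : nat) (c : L) : R[i] :=
  \sum_(k < p | (k%:R : L) == abstrace p m c)
     expi ((2 * pi * (k%:R : R)) / (p%:R : R)).

(* Main.v *)
Require Import Defs.
From HB Require Import structures.
From mathcomp Require Import all_boot all_order all_algebra all_field.
From mathcomp Require Import complex.
From mathcomp Require Import reals trigo.
Import Order.TTheory GRing.Theory Num.Theory.
Local Open Scope ring_scope.
From mathcomp Require Import ring lra zify.

Lemma card_root_le (L : fieldType) (T : finType) (f : T -> L) (P : {poly L}) (A : {pred T}) :
  P != 0 -> {in A &, injective f} -> (forall x, x \in A -> root P (f x)) -> (#|A| < size P)%N.
Proof.
move=> P0 inj sub; rewrite cardE -(size_map f).
apply: max_poly_roots => //.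
  apply/allP=> z /mapP[x xA ->]; apply: sub; by rewrite -mem_enum.
rewrite map_inj_in_uniq ?enum_uniq //.
by move=> x y; rewrite !mem_enum; apply: inj.
Qed.

Lemma sum_bound (T : finType) (I : {pred T}) (f : T -> nat) (B M : nat) : (0 < B)%N ->
  (forall i, i \in I -> f i <= B)%N -> (#|I| <= M)%N -> (\sum_(i in I) f i = B * M)%N ->
  (forall i, i \in I -> f i = B) /\ #|I| = M.
Proof.
move=> B0 fB IM tot.
have le1 : (\sum_(i in I) f i <= #|I| * B)%N.
  by rewrite -sum_nat_const; apply: leq_sum.
split; last by nia.
move=> i iI; apply/eqP; rewrite eqn_leq fB //=; rewrite leqNgt; apply/negP => lt.
have : (\sum_(j in I) f j <= f i + (#|I| - 1) * B)%N.
  rewrite (bigD1 i) //= leq_add2l.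
  have -> : (#|I| - 1 = #|[pred j in I | j != i]|)%N.
    by rewrite (cardD1 i) iI add1n subn1 /=; apply: eq_card => j; rewrite !inE andbC.
  rewrite -sum_nat_const.
  apply: (@leq_trans (\sum_(j in I | j != i) B)%N).
    by apply: leq_sum => j /andP[? _]; apply: fB.
  by apply: eq_leq; apply: eq_bigl => j.
have : (0 < #|I|)%N by apply/card_gt0P; exists i.
nia.
Qed.

Section Main.
Variables (R : realType) (L : finFieldType) (p n : nat).
Hypotheses (hp : prime p) (hn : (0 < n)%N) (hL : #|L| = ((p ^ n) ^ 2)%N).
Local Notation q := (p ^ n)%N.

Lemma charL : p \in [pchar L].
Proof. by apply: (card_finPcharP (n := (n * 2)%N)) => //; rewrite expnM. Qed.

Lemma frobD k (x y : L) : (x + y) ^+ (p ^ k) = x ^+ (p ^ k) + y ^+ (p ^ k).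
Proof.
apply: exprDn_pchar; rewrite (eq_pnat _ (pcharf_eq charL)) pnatX pnat_id //.
Qed.

Lemma p_gt1 : (1 < p)%N. Proof. exact: prime_gt1. Qed.
Lemma q_gt1 : (1 < q)%N.
Proof. by rewrite -[1%N](expn0 p) ltn_exp2l ?p_gt1. Qed.

Lemma expq2 (x : L) : x ^+ (q * q) = x.
Proof. by rewrite mulnn -hL expf_card. Qed.

Lemma frobqq (x : L) : (x ^+ q) ^+ q = x.
Proof. by rewrite -exprM expq2. Qed.

Lemma frobsum k (I : finType) (P : pred I) (F : I -> L) :
  (\sum_(i | P i) F i) ^+ (p ^ k) = \sum_(i | P i) F i ^+ (p ^ k).
Proof.
elim/big_rec2: _ => [|i x y _ <-]; first by rewrite expr0n expn_eq0 -leqn0 leqNgt prime_gt0...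
by rewrite frobD.
Qed.


Definition Fq (x : L) : bool := x ^+ q == x.

Lemma frobqD (x y : L) : (x + y) ^+ q = x ^+ q + y ^+ q.
Proof. exact: frobD. Qed.

Lemma frobqz (x : L) (e : int) : (x ^ e) ^+ q = (x ^+ q) ^ e.
Proof. by rewrite !exprnP exprzAC. Qed.

Lemma FqD x y : Fq x -> Fq y -> Fq (x + y).
Proof. by rewrite /Fq frobqD => /eqP-> /eqP->. Qed.
Lemma FqM x y : Fq x -> Fq y -> Fq (x * y).
Proof. by rewrite /Fq exprMn => /eqP-> /eqP->. Qed.
Lemma FqV x : Fq x -> Fq (x^-1).
Proof. by rewrite /Fq exprVn => /eqP->. Qed.
Lemma Fqz x e : Fq x -> Fq (x ^ e).
Proof. by rewrite /Fq frobqz => /eqP->. Qed.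
Lemma FqN x : Fq (x ^+ q.+1).
Proof. by rewrite /Fq -exprM mulSn exprD expq2 exprS mulrC. Qed.
Lemma FqT x : Fq (x + x ^+ q).
Proof. by rewrite /Fq frobqD frobqq addrC. Qed.

Lemma card_fiber_le y : (#|[pred x : L | x ^+ q.+1 == y]| <= q.+1)%N.
Proof.
rewrite -ltnS -(size_XnsubC y (ltn0Sn q)).
apply: (@card_root_le _ _ id) => //.
  by rewrite -size_poly_eq0 size_XnsubC.
by move=> x; rewrite inE rootE !hornerE subr_eq0.
Qed.

Lemma card_Fqx_le : (#|[pred z : L | (z != 0%R) && Fq z]| <= q.-1)%N.
Proof.
have q1 : (0 < q.-1)%N by have := q_gt1; lia.
rewrite -ltnS -(size_XnsubC (1 : L) q1).
apply: (@card_root_le _ _ id) => //.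
  by rewrite -size_poly_eq0 size_XnsubC.
move=> z; rewrite inE /Fq => /andP[z0 /eqP zq].
rewrite rootE !hornerE subr_eq0; apply/eqP.
apply: (mulIf z0); rewrite mul1r -exprSr prednK //; lia.
Qed.

Lemma fiber_count :
  (forall y, (y != 0%R) && Fq y -> #|[pred x : L | x ^+ q.+1 == y]| = q.+1)
  /\ #|[pred z : L | (z != 0%R) && Fq z]| = q.-1.
Proof.
have := @sum_bound L [pred z : L | (z != 0%R) && Fq z]
  (fun y => #|[pred x : L | x ^+ q.+1 == y]|) q.+1 q.-1 (ltn0Sn _)
  (fun y _ => card_fiber_le y) card_Fqx_le.
case.
  rewrite -[LHS]/(\sum_(y | (y != 0%R) && Fq y) #|[pred x : L | x ^+ q.+1 == y]|)%N.
  have -> : (q.+1 * q.-1 = #|[pred x : L | x != 0%R]|)%N.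
    rewrite -[#|_|]/#|predC1 0| cardC1 hL; have := q_gt1; nia.
  rewrite -sum1_card [RHS](partition_big (fun x => x ^+ q.+1) (fun y => (y != 0) && Fq y)).
    apply: eq_bigr => y /andP[y0 _]; rewrite sum1_card; apply: eq_card => x.
    rewrite !inE unfold_in /= !inE.
    case: eqP => [xy|]; rewrite ?andbT ?andbF //; apply/esym.
    by apply: contraNneq y0 => x0; rewrite -xy x0 expr0n.
  by move=> x; rewrite inE => x0; rewrite FqN expf_neq0.
by move=> h1 h2; split=> // y hy; apply: h1.
Qed.


Definition ek (k : nat) : R[i] := expi ((2 * pi * (k%:R : R)) / (p%:R : R)).

Lemma expiD (s t : R) : expi (s + t) = expi s * expi t.
Proof. rewrite /expi cosD sinD. rewrite [RHS]/GRing.mul /=. congr Complex; ring. Qed.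

Lemma expi2pi (s : R) : expi (s + 2 * pi) = expi s.
Proof.
have -> : 2 * pi = pi *+ 2 :> R by rewrite mulr_natl.
by rewrite /expi cosD2pi sinD2pi.
Qed.

Lemma pR0 : (p%:R : R) != 0.
Proof. by rewrite pnatr_eq0 -lt0n prime_gt0. Qed.

Lemma ekD k1 k2 : (k1 < p)%N -> (k2 < p)%N -> ek ((k1 + k2) %% p) = ek k1 * ek k2.
Proof.
move=> h1 h2; rewrite /ek -expiD.
case: (ltnP (k1 + k2) p) => h.
  by rewrite modn_small // natrD mulrDr mulrDl.
have -> : ((k1 + k2) %% p = k1 + k2 - p)%N.
  by rewrite -{1}(subnK h) modnDr modn_small; lia.
have -> : 2 * pi * (k1%:R : R) / p%:R + 2 * pi * k2%:R / p%:R
    = 2 * pi * (k1 + k2 - p)%:R / p%:R + 2 * pi.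
  rewrite natrB // natrD; field; exact: pR0.
by rewrite expi2pi.
Qed.

Lemma ek_neq1 k : (0 < k < p)%N -> ek k != 1.
Proof.
move=> /andP[k0 kp]; apply/negP => /eqP; rewrite /ek /expi; case=> c1 _.
have u0 : 0 < (k%:R : R) / p%:R by rewrite divr_gt0 ?ltr0n // prime_gt0.
have u1 : (k%:R : R) / p%:R < 1.
  by rewrite ltr_pdivrMr ?ltr0n ?prime_gt0 // mul1r ltr_nat.
have eth : 2 * pi * (k%:R : R) / p%:R = 2 * (pi * (k%:R / p%:R)) by rewrite !mulrA.
rewrite eth in c1.
move: u0 u1 c1; set u := (k%:R : R) / p%:R => u0 u1 c1.
have pi0 := @pi_gt0 R.
have v0 : 0 < pi * u by rewrite mulr_gt0.
have v1 : pi * u < pi by nra.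
move: v0 v1 c1; set v := pi * u => v0 v1 c1.
have c0 : cos (0 : R) = 1 by rewrite cos0.
case: (lerP (2 * v) pi) => h.
  have := @cos_inj R (2 * v) 0.
  rewrite !in_itv /= c1 c0 => /(_ _ _ erefl).
  have hA : (0 <= 2 * v <= pi) by apply/andP; split; lra.
  have hB : (0 <= (0:R) <= pi) by apply/andP; split; lra.
  by move=> /(_ hA hB) => e; lra.
have c2 : cos (2 * pi - 2 * v) = 1.
  have e : 2 * v - 2 * pi + pi *+ 2 = 2 * v by rewrite -mulr_natl; ring.
  by rewrite -cosN opprB -[RHS]c1 -[X in _ = cos X]e cosD2pi.
have := @cos_inj R (2 * pi - 2 * v) 0.
rewrite !in_itv /= c2 c0 => /(_ _ _ erefl).
have hA : (0 <= 2 * pi - 2 * v <= pi) by apply/andP; split; lra.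
have hB : (0 <= (0:R) <= pi) by apply/andP; split; lra.
by move=> /(_ hA hB) => e; lra.
Qed.

Definition trn (c : L) : L := abstrace p n c.
Definition chi (c : L) : R[i] := canchar R p n c.

Lemma natr_inj_lt k1 k2 : (k1 < p)%N -> (k2 < p)%N ->
  ((k1%:R : L) == k2%:R) = (k1 == k2).
Proof.
wlog le12 : k1 k2 / (k1 <= k2)%N.
  move=> W h1 h2; case: (leqP k1 k2) => h; first exact: W.
  by rewrite eq_sym W ?(ltnW h) // eq_sym.
move=> h1 h2; rewrite eq_sym -subr_eq0 -natrB // -(dvdn_pcharf charL).
apply/idP/eqP => [d|->]; last by rewrite subnn dvdn0.
have : (k2 - k1 == 0)%N.
  by apply: contraTT d => nz; rewrite gtnNdvd // ?lt0n //; lia.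
lia.
Qed.

Lemma chi_val c k : (k < p)%N -> trn c = k%:R -> chi c = ek k.
Proof.
move=> kp e; rewrite /chi /canchar -/(trn c) e.
rewrite (big_pred1 (Ordinal kp)) // => i /=.
by rewrite natr_inj_lt.
Qed.

Lemma FqNeg x : Fq x -> Fq (- x).
Proof.
rewrite /Fq => /eqP xq; apply/eqP.
have := frobqD x (- x); rewrite subrr expr0n /= xq.
have -> : (q == 0%N) = false by apply/negbTE; rewrite -lt0n ltnW // q_gt1.
by move=> e; apply/eqP; rewrite -addr_eq0 addrC -e.
Qed.

Lemma Fq0 : Fq 0.
Proof.
rewrite /Fq expr0n.
by have -> : (q == 0%N) = false by apply/negbTE; rewrite -lt0n ltnW // q_gt1.
Qed.

Lemma trnD x y : trn (x + y) = trn x + trn y.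
Proof. by rewrite /trn /abstrace -big_split; apply: eq_bigr => i _; rewrite frobD. Qed.

Lemma trn_frob c : Fq c -> trn c ^+ p = trn c.
Proof.
move=> /eqP cq; rewrite /trn /abstrace.
have h := @frobsum 1 _ xpredT (fun i : 'I_n => c ^+ (p ^ i)); rewrite expn1 in h; rewrite h.
case: n hn cq h => // n' _ cq _.
under eq_bigr do rewrite -exprM -expnSr.
rewrite big_ord_recr big_ord_recl /= expn0 expr1 cq addrC; congr (_ + _).
Qed.

Lemma natr_frob k : (k%:R : L) ^+ p = k%:R.
Proof. by rewrite -(pFrobenius_autE charL) rmorph_nat. Qed.

Lemma fixp_nat (x : L) : x ^+ p = x -> exists2 k, (k < p)%N & x = k%:R.
Proof.
move=> xp; case: (pickP (fun k : 'I_p => x == k%:R)) => [k /eqP e|none].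
  by exists k.
exfalso.
pose f (i : 'I_p.+1) : L := if (i < p)%N then (i : nat)%:R else x.
have sz : size ('X^p - 'X : {poly L}) = p.+1.
  by rewrite size_addl ?size_polyXn // size_polyN size_polyX ltnS p_gt1.
have := @card_root_le _ _ f ('X^p - 'X) (mem 'I_p.+1).
rewrite card_ord sz ltnn; move=> H; suff: false by []; apply: H.
- by rewrite -size_poly_eq0 sz.
- move=> i j _ _; rewrite /f.
  case: (ltnP i p) => hi; case: (ltnP j p) => hj.
  + by move/eqP; rewrite natr_inj_lt // => /eqP e; apply: val_inj.
  + by move=> e; have := none (Ordinal hi); rewrite /= e eqxx.
  + by move=> e; have := none (Ordinal hj); rewrite /= -e eqxx.
  + move=> _; apply: ord_inj; have := ltn_ord i; have := ltn_ord j; lia.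
- move=> i _; rewrite rootE !hornerE /f subr_eq0; case: ifP => _.
    by rewrite natr_frob.
  by rewrite xp.
Qed.

Lemma trn_prime c : Fq c -> exists2 k, (k < p)%N & trn c = k%:R.
Proof. by move=> /trn_frob; apply: fixp_nat. Qed.

Lemma chiD x y : Fq x -> Fq y -> chi (x + y) = chi x * chi y.
Proof.
move=> /trn_prime[k1 h1 e1] /trn_prime[k2 h2 e2].
rewrite (@chi_val _ _ h1 e1) (@chi_val _ _ h2 e2) -ekD //.
apply: chi_val; first by rewrite ltn_pmod // prime_gt0.
by rewrite trnD e1 e2 -natrD (GRing.natr_mod_pchar charL).
Qed.

Lemma card_Fq : #|[pred z : L | Fq z]| = q.
Proof.
rewrite (cardD1 0) inE Fq0.
rewrite (eq_card (B := [pred z | (z != 0) && Fq z])); last by move=> z; rewrite !inE.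
rewrite fiber_count.2; have := q_gt1; lia.
Qed.

Lemma exists_trn_ne0 : exists2 t, Fq t & trn t != 0.
Proof.
case: (pickP (fun t => Fq t && (trn t != 0))) => [t /andP[] |none]; first by exists t.
exfalso.
have [n' en] : exists n', n = n'.+1 by exists n.-1; lia.
pose T : {poly L} := \sum_(i < n) 'X^(p ^ i).
have szT : size T = (p ^ n').+1.
  rewrite /T en big_ord_recr /= addrC size_addl ?size_polyXn //.
  apply: leq_ltn_trans (size_sum _ _ _) _; rewrite ltnS.
  by apply/bigmax_leqP => i _; rewrite size_polyXn ltn_exp2l ?p_gt1.
have := @card_root_le _ _ id T [pred z : L | Fq z].
rewrite card_Fq szT => H.
have : (q < (p ^ n').+1)%N.
  apply: H.
  - by rewrite -size_poly_eq0 szT.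
  - by move=> ? ? _ _.
  - move=> t; rewrite inE => ft; rewrite rootE /T horner_sum.
    have := none t; rewrite /= ft /= => /negbFE/eqP e; rewrite -[X in _ == X]e.
    by rewrite /trn /abstrace; apply/eqP; apply: eq_bigr => i _; rewrite hornerXn.

rewrite en expnS; have := p_gt1; have : (0 < p ^ n')%N by rewrite expn_gt0 prime_gt0.
nia.
Qed.

Lemma sum_chi_shift s : Fq s ->
  \sum_(t | Fq t) chi (s + t) = \sum_(t | Fq t) chi t.
Proof.
move=> fs; rewrite [RHS](reindex_inj (addrI s)); apply: eq_bigl => t.
apply/idP/idP => [ft|]; first exact: FqD.
by move=> fst; rewrite -(addKr s t); apply: FqD => //; apply: FqNeg.
Qed.

Lemma sum_chi s : Fq s -> \sum_(t | Fq t) chi (s + t) = 0.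
Proof.
move=> fs; rewrite sum_chi_shift //.
have [t0 ft0 nz] := exists_trn_ne0.
have := @sum_chi_shift t0 ft0.
under eq_bigr => t ft do rewrite chiD //.
rewrite -mulr_sumr => /eqP; rewrite -subr_eq0 -{2}[\sum_(t | Fq t) chi t]mul1r -mulrBl.
rewrite mulf_eq0 => /orP[|/eqP//].
have [k kp ek0] := @trn_prime t0 ft0.
have nk : ek k != 1.
  apply: ek_neq1; rewrite kp andbT lt0n; apply: contra nz => /eqP k0.
  by rewrite ek0 k0.
by rewrite (@chi_val _ _ kp ek0) subr_eq0 (negbTE nk).
Qed.


Lemma canchar2 (c : L) : canchar R p (2 * n) c = chi (c + c ^+ q).
Proof.
rewrite /chi /canchar.
have -> : abstrace p (2 * n) c = abstrace p n (c + c ^+ q); last by [].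
rewrite -/(trn _) trnD /trn /abstrace mul2n -addnn big_split_ord /=; congr (_ + _).
by apply: eq_bigr => i _; rewrite -exprM -expnD.
Qed.

Lemma quad_card (c t : L) :
  (#|[pred v : L | ((v ^+ q.+1 == c) && (v + v ^+ q == t))%R]|
   + #|[pred z : L | ((z != 0) && Fq z && (z + z^-1 * c == t))%R]| <= 2)%N.
Proof.
set PM := [pred v : L | (v ^+ q.+1 == c) && (v + v ^+ q == t)].
set PN := [pred z : L | (z != 0) && Fq z && (z + z^-1 * c == t)].
pose Q := [set x : L | x ^+ 2 - t * x + c == 0].
have MQ : forall v, v \in PM -> v \in Q.
  move=> v; rewrite !inE => /andP[/eqP <- /eqP <-].
  by rewrite (exprS v q); move: (v ^+ q) => w; apply/eqP; ring.
have NQ : forall z, z \in PN -> z \in Q.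
  move=> z; rewrite !inE => /andP[/andP[z0 _] /eqP <-].
  by apply/eqP; field.
have pair : forall r r', r \in Q -> r' \in Q -> (r' == r) || (r' == t - r).
  move=> r r'; rewrite !inE => /eqP h1 /eqP h2.
  have : (r' - r) * (r' + r - t) == 0.
    have -> : (r' - r) * (r' + r - t) = (r' ^+ 2 - t * r' + c) - (r ^+ 2 - t * r + c) by ring.
    by rewrite h1 h2 subrr.
  rewrite mulf_eq0 !subr_eq0 => /orP[->//|/eqP e]; apply/orP; right.
  by apply/eqP; rewrite -e; ring.
have cQ : (#|Q| <= 2)%N.
  case: (set_0Vmem Q) => [->|[r rQ]]; first by rewrite cards0.
  apply: (@leq_trans #|[set r; t - r]|).
    apply: subset_leq_card; apply/subsetP => r' r'Q.
    by rewrite !inE; apply: pair.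
  by rewrite cards2; case: (r != t - r).
case: (pickP [pred w | (w \in PM) && (w \in PN)]) => [w /andP[wM wN]|none].
  have Qw : forall r, r \in Q -> r = w.
    move: (wM) (wN); rewrite !inE => /andP[/eqP wc /eqP wt] /andP[/andP[w0 /eqP wq] _].
    move=> r rQ; have := pair w r (MQ _ wM) rQ.
    case/orP => /eqP //; rewrite -wt wq => ->; ring.
  have c1 : forall (A : {pred L}), (forall x, x \in A -> x \in Q) -> (#|A| <= 1)%N.
    move=> A AQ; rewrite -(cards1 w); rewrite -cardsE; apply: subset_leq_card.
    by apply/subsetP => x; rewrite !inE => xA; apply/eqP; apply: Qw; apply: AQ.
  exact: (leq_add (c1 _ MQ) (c1 _ NQ)).
rewrite -(cardsE PM) -(cardsE PN) -cardsUI.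
have -> : [set x in PM] :&: [set x in PN] = set0.
  apply/setP => x; rewrite !inE; have := none x; rewrite /= => ->; by [].
rewrite cards0 addn0; apply: leq_trans cQ; apply: subset_leq_card.
apply/subsetP => x; rewrite in_setU => /orP[] xP; [apply: MQ | apply: NQ]; by move: xP; rewrite !inE.
Qed.


Lemma card_part (J : finType) (P : pred L) (g : L -> J) (Q : pred J) :
  (forall x, P x -> Q (g x)) ->
  #|[pred x | P x]| = (\sum_(j | Q j) #|[pred x | P x && (g x == j)]|)%N.
Proof.
move=> h; rewrite -[LHS]sum1_card (partition_big g Q) //=.
by apply: eq_bigr => j _; rewrite sum1dep_card; apply: eq_card => x; rewrite !inE.
Qed.

Lemma sum_const_pred (P : pred L) (x : R[i]) : \sum_(i | P i) x = x *+ #|[pred i | P i]|.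
Proof. by rewrite -sumr_const. Qed.

Lemma kloost (s c : L) : Fq s -> c != 0 -> Fq c ->
  \sum_(v | v ^+ q.+1 == c) chi (s + (v + v ^+ q)) =
  - \sum_(z | (z != 0) && Fq z) chi (z + s + z^-1 * c).
Proof.
move=> fs c0 fc.
pose m t := #|[pred v : L | (v ^+ q.+1 == c) && (v + v ^+ q == t)]|.
pose nn t := #|[pred z : L | (z != 0) && Fq z && (z + z^-1 * c == t)]|.
have Fqz : forall z, (z != 0) && Fq z -> Fq (z + z^-1 * c).
  by move=> z /andP[_ fz]; apply: FqD => //; apply: FqM => //; apply: FqV.
have sm : (\sum_(t | Fq t) m t)%N = q.+1.
  rewrite -(fiber_count.1 c); last by rewrite c0.
  by rewrite (@card_part _ (fun v => v ^+ q.+1 == c) (fun v => v + v ^+ q) Fq) // => v _; apply: FqT.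
have sn : (\sum_(t | Fq t) nn t)%N = q.-1.
  by rewrite -fiber_count.2 (@card_part _ (fun z => (z != 0) && Fq z) (fun z => z + z^-1 * c) Fq).
have mn2 : forall t, Fq t -> (m t + nn t)%N = 2.
  have := @sum_bound L [pred t | Fq t] (fun t => m t + nn t)%N 2 q isT
     (fun t _ => quad_card c t).
  rewrite card_Fq leqnn => /(_ isT).
  case.
    rewrite big_split /= sm sn; have := q_gt1; lia.
  by move=> h _ t ft; apply: h.
have eL : \sum_(v | v ^+ q.+1 == c) chi (s + (v + v ^+ q)) = \sum_(t | Fq t) chi (s + t) *+ m t.
  rewrite (partition_big (fun v => v + v ^+ q) Fq) /=; last by move=> v _; apply: FqT.
  apply: eq_bigr => t _.
  rewrite (eq_bigr (fun _ => chi (s + t))); last by move=> v /andP[_ /eqP ->].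
  by rewrite sum_const_pred.
have eR : \sum_(z | (z != 0) && Fq z) chi (z + s + z^-1 * c) = \sum_(t | Fq t) chi (s + t) *+ nn t.
  rewrite (partition_big (fun z => z + z^-1 * c) Fq) /=; last exact: Fqz.
  apply: eq_bigr => t _.
  rewrite (eq_bigr (fun _ => chi (s + t))); last first.
    by move=> z /andP[_ /eqP <-]; congr chi; rewrite addrAC addrC.
  by rewrite sum_const_pred.
apply/eqP; rewrite -addr_eq0 eL eR -big_split /=.
rewrite (eq_bigr (fun t => chi (s + t) *+ 2)); last first.
  by move=> t ft; rewrite -mulrnDr mn2.
by rewrite sumrMnl sum_chi // mul0rn.
Qed.


Lemma frobz_gen (x : L) (e : int) (m : nat) : (x ^ e) ^+ m = (x ^+ m) ^ e.
Proof. by rewrite !exprnP exprzAC. Qed.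

Lemma unit_pow_trivial (u : L) (e : int) :
  gcdz (q.+1)%:Z e = 1%N -> u != 0 -> u ^+ q.+1 = 1 -> u ^ e = 1 -> u = 1.
Proof.
move=> g u0 h1 h2.
have [al [be hab]] := Bezoutz (q.+1)%:Z e.
rewrite g in hab.
have -> : u = u ^ (al * (q.+1)%:Z + be * e) by rewrite hab expr1z.
rewrite expfzDr //.
by rewrite [al * _]mulrC [be * _]mulrC -!exprz_exp -exprnP h1 h2 !exp1rz mulr1.
Qed.

Lemma fiber_bij (F : L -> R[i]) (b y : L) (e2 : int) :
  gcdz (q.+1)%:Z e2 = 1%N -> b != 0 -> y != 0 -> Fq y ->
  \sum_(x | (x != 0) && (x ^+ q.+1 == y)) F (b * x ^ e2)
  = \sum_(v | v ^+ q.+1 == b ^+ q.+1 * y ^ e2) F v.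
Proof.
move=> g b0 y0 fy.
set c := b ^+ q.+1 * y ^ e2.
have c0 : c != 0 by rewrite mulf_neq0 ?expf_neq0 ?expfz_neq0.
have fc : Fq c by apply: FqM; [apply: FqN | apply: Fqz].
pose h x := b * x ^ e2.
pose A := [set x : L | (x != 0) && (x ^+ q.+1 == y)].
pose B := [set v : L | v ^+ q.+1 == c].
have cA : #|A| = q.+1.
  rewrite -(fiber_count.1 y); last by rewrite y0.
  apply: eq_card => x; rewrite !inE; case: (x ^+ q.+1 =P y) => xy; rewrite ?andbT ?andbF //.
  by apply: contraNneq y0 => x0; rewrite -xy x0 expr0n.
have cB : #|B| = q.+1.
  rewrite -(fiber_count.1 c); last by rewrite c0.
  by apply: eq_card => x; rewrite !inE.
have inj : {in A &, injective h}.
  move=> x1 x2; rewrite !inE => /andP[x10 /eqP e1] /andP[x20 /eqP e2'] /eqP.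
  rewrite /h (inj_eq (mulfI b0)) => /eqP ee.
  have u1 : x1 / x2 = 1.
    apply: unit_pow_trivial g _ _ _.
    - by rewrite mulf_neq0 ?invr_eq0.
    - by rewrite exprMn exprVn e1 e2' divff.
    - by rewrite exprzMl ?unitfE ?invr_eq0 // -expfV ee divff // expfz_neq0.
  by apply: (mulIf (invr_neq0 x20)); rewrite mulfV.
have hAB : h @: A = B.
  apply/eqP; rewrite eqEcard card_in_imset // cA cB leqnn andbT.
  apply/subsetP => v /imsetP[x xA ->]; move: xA; rewrite !inE => /andP[_ /eqP xy].
  by rewrite /h exprMn frobz_gen xy.
rewrite (eq_bigl (fun x => x \in A)); last by move=> x; rewrite !inE.
rewrite (eq_bigl (fun v => v \in B) (fun v => F v)); last by move=> v; rewrite !inE.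
by rewrite -hAB big_imset.
Qed.


Lemma main (e1 e2 : int) (a b : L)
  (ha : a ^+ q + a != 0) (hb : b != 0) (hgcd : gcdz (q.+1)%:Z e2 = 1%N) :
  \sum_(x : L | x != 0)
      canchar R p (2 * n) (a * x ^ ((q.+1)%:Z * e1) + b * x ^ e2)
  = - \sum_(z : L | (z != 0) && (z ^+ q == z))
        \sum_(x : L | (x != 0) && (x ^+ q == x))
          canchar R p n (z + (a ^+ q + a) * x ^ e1
                           + z^-1 * b ^+ q.+1 * x ^ e2).
Proof.
set A := a ^+ q + a.
have fA : Fq A by rewrite /A addrC FqT.
have E : forall x : L, a * x ^ ((q.+1)%:Z * e1) + b * x ^ e2
    + (a * x ^ ((q.+1)%:Z * e1) + b * x ^ e2) ^+ q
    = A * (x ^+ q.+1) ^ e1 + (b * x ^ e2 + (b * x ^ e2) ^+ q).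
  move=> x; rewrite -exprz_exp -exprnP.
  have := @Fqz _ e1 (FqN x); rewrite /Fq; move: ((x ^+ q.+1) ^ e1) => X /eqP fX.
  rewrite frobqD exprMn fX /A; move: (b * x ^ e2) => Y.
  move: (Y ^+ q) (a ^+ q) => Yq aq; ring.
under eq_bigr do rewrite canchar2 E.
rewrite (partition_big (fun x => x ^+ q.+1) (fun y => (y != 0) && Fq y)) /=; last first.
  by move=> x x0; rewrite FqN expf_neq0.
rewrite exchange_big /= -sumrN.
apply: eq_bigr => y /andP[y0 fy].
rewrite (eq_bigr (fun x => chi (A * y ^ e1 + (b * x ^ e2 + (b * x ^ e2) ^+ q)))); last first.
  by move=> x /andP[_ /eqP ->].
rewrite (@fiber_bij (fun v => chi (A * y ^ e1 + (v + v ^+ q)))) //.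
rewrite kloost; first last.
- by apply: FqM; [apply: FqN | apply: Fqz].
- by rewrite mulf_neq0 ?expf_neq0 ?expfz_neq0.
- by apply: FqM => //; apply: Fqz.
congr (- _); apply: eq_bigr => z _; rewrite /chi; congr canchar.
by rewrite mulrA.
Qed.

End Main.

Theorem lemma2 (R : realType) (L : finFieldType) (p n : nat)
  (hp : prime p) (hn : (0 < n)%N) (hL : #|L| = ((p ^ n) ^ 2)%N)
  (e1 e2 : int) (a b : L)
  (ha : a ^+ (p ^ n) + a != 0) (hb : b != 0)
  (hgcd : gcdz ((p ^ n).+1)%:Z e2 = 1%N) :
  \sum_(x : L | x != 0)
      canchar R p (2 * n) (a * x ^ (((p ^ n).+1)%:Z * e1) + b * x ^ e2)
  = - \sum_(z : L | (z != 0) && (z ^+ (p ^ n) == z))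
        \sum_(x : L | (x != 0) && (x ^+ (p ^ n) == x))
          canchar R p n (z + (a ^+ (p ^ n) + a) * x ^ e1
                           + z^-1 * b ^+ ((p ^ n).+1) * x ^ e2).
Proof. exact: main. Qed.
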